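(* Let $k\ge\ell\ge1$ be integers with $k+\ell\ge6$ and let $G$ be a finite digraph. For every pair of non-adjacent vertices $x\in X$, $y\in Y$, $$s(x,y)\le\frac{m-1}{(m+1)\binom{m}{k}}(\alpha+\beta)(1-D)^{m-2}.$$
   Context: Put $m=k+\ell$. Digraphs are finite, without loops; $xy$ denotes an arc from $x$ to $y$; two vertices are adjacent if at least one of $xy,yx$ is an arc. The oriented star $S_{k,\ell}$ has a center $c$, a set $O$ of $k$ out-leaves and a set $I$ of $\ell$ in-leaves; its arcs are exactly $co$ ($o\in O$) and $ic$ ($i\in I$). For a digraph $G$ on $n$ vertices, let $\phi$ be a uniformly random map from $V(S_{k,\ell})$ to $V(G)$ (all $n^{m+1}$ maps equally likely), and let $\mathcal S$ be the set of maps $\phi$ that are isomorphisms from $S_{k,\ell}$ onto $G[\mathrm{Im}\,\phi]$ (in particular injective); $s(x,y)=\Pr[\phi\in\mathcal S\mid \{x,y\}\subseteq\mathrm{Im}\,\phi]$. For $A\subseteq V(G)$, $\rho_A(v)$ is the number of vertices of $A$ adjacent to $v$ divided by $n$, and $\rho(v)=\rho_{V(G)}(v)$. $X=\{v:\rho(v)\ge1/2\}$, $Y=V(G)\setminus X$, $\alpha=|X|/n$, $D=\min_{x\in X}\rho(x)$, $\beta=\max_{y\in Y}\rho_Y(y)$. *)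

(* Defs.v *)
From HB Require Import structures.
From mathcomp Require Import all_boot all_order all_algebra.
Set Implicit Arguments. Unset Strict Implicit. Unset Printing Implicit Defensive.
Import Order.TTheory GRing.Theory Num.Theory.
Local Open Scope ring_scope.

(* A digraph on a finite vertex type V is an arc relation [arc : rel V]
   (arc u v means there is an arc u -> v); loops are excluded by a separate
   hypothesis [irreflexive arc] in the theorem. *)

(* Oriented star S_{k,l} on vertex set 'I_(k+l).+1 : vertex 0 is the centre,
   vertices 1..k are the out-leaves, vertices k+1..k+l the in-leaves. *)
Definition star_arc (k l : nat) : rel 'I_(k + l).+1 :=
  fun u v => ((val u == 0%N) && (1 <= val v <= k)%N)
          || ((val v == 0%N) && (k < val u)%N).

Section Digraph.
Variables (V : finType) (arc : rel V).

Definition adjacent (u v : V) : bool := arc u v || arc v u.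

Definition is_star_copy (k l : nat) (phi : {ffun 'I_(k + l).+1 -> V}) : bool :=
  injectiveb phi &&
  [forall u, forall v, star_arc u v == arc (phi u) (phi v)].

(* s(x,y) = Pr[phi in S | {x,y} subset Im phi], phi uniform among all maps. *)
Definition s_prob (R : realFieldType) (k l : nat) (x y : V) : R :=
  (#|[set phi : {ffun 'I_(k + l).+1 -> V} |
       [&& is_star_copy phi, x \in codom phi & y \in codom phi]]|%:R)
  / (#|[set phi : {ffun 'I_(k + l).+1 -> V} |
       (x \in codom phi) && (y \in codom phi)]|%:R).

Definition rho_in (R : realFieldType) (A : {set V}) (v : V) : R :=
  #|[set a in A | adjacent a v]|%:R / #|V|%:R.

Definition rho (R : realFieldType) (v : V) : R := rho_in R [set: V] v.

Definition Xset (R : realFieldType) : {set V} :=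
  [set v | (1 / 2 : R) <= rho R v].

Definition Yset (R : realFieldType) : {set V} := ~: Xset R.

Definition alpha (R : realFieldType) : R := #|Xset R|%:R / #|V|%:R.

(* D = min_{x in X} rho(x); since rho <= 1 the neutral element 1 is harmless
   whenever X is nonempty (which is the case in the theorem). *)
Definition Dmin (R : realFieldType) : R :=
  \big[Order.min/1]_(x in Xset R) rho R x.

(* beta = max_{y in Y} rho_Y(y); values are >= 0 so neutral element 0 is
   harmless whenever Y is nonempty. *)
Definition betamax (R : realFieldType) : R :=
  \big[Order.max/0]_(y in Yset R) rho_in R (Yset R) y.

End Digraph.

(* Main.v *)
Require Import Defs.
From HB Require Import structures.
From mathcomp Require Import all_boot all_order all_algebra.
From mathcomp Require Import zify ring lra.
Import Order.TTheory GRing.Theory Num.Theory.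


Lemma lexp a b e : a <= b -> a ^ e <= b ^ e.
Proof. move=> h; elim: e => [|e IH]; rewrite ?expn0 // !expnS; exact: leq_mul. Qed.

Lemma bern_nat a M : a ^ M.+1 + M.+1 * a ^ M <= (a + 1) ^ M.+1.
Proof.
elim: M => [|M IH]; first by rewrite !expn1 expn0; lia.
rewrite !(expnS a) (expnS (a+1)).
move: IH; set p := a ^ M; set q := (a+1) ^ M.+1; rewrite expnS -/p => IH.
have := leq_mul (leqnn (a+1)) IH. nia.
Qed.

Lemma sd_nat t M :
  2 * (t+1) ^ M.+2 + M.+2 * M.+1 * t ^ M <= (t+2) ^ M.+2 + t ^ M.+2.
Proof.
elim: M => [|M IH]; first by rewrite !expnS !expn0; nia.
have B := bern_nat (t+1) M.+1.
have tv : t ^ M.+1 <= (t+1) ^ M.+1 by apply: lexp; lia.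
rewrite (_ : t + 1 + 1 = t + 2) in B; last lia.
move: IH B tv; rewrite !expnS.
set u := (t+1) ^ M; set w := (t+2) ^ M; set p := t ^ M.
move=> IH B tv.
have := leq_mul (leqnn t) IH.
have := leq_mul (leqnn 2) B.
have := leq_mul (leqnn (2 * M.+2)) tv.
nia.
Qed.

Lemma ffact_le_exp n m : n ^_ m <= n ^ m.
Proof.
elim: m => [|m IH]; first by rewrite ffactn0 expn0.
rewrite ffactnSr expnSr; apply: leq_mul => //; lia.
Qed.

Lemma ratio_nat N n p : 2 <= N -> N.*2 <= n -> 0 < p ->
  (N-2) ^ p * n ^ p.+1 <= N ^ p * (n-2) ^ p.+1.
Proof.
move=> H2 Hn Hp.
have h1 : (N-2) * (n*n) <= N * ((n-2)*(n-2)) by nia.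
have h2 : ((N-2) * (n*n)) ^ p <= (N * ((n-2)*(n-2))) ^ p by apply: lexp.
rewrite !expnMn in h2.
have hnp : 0 < n ^ p.-1 by rewrite expn_gt0; lia.
rewrite -(leq_pmul2r hnp).
have E1 : n ^ p.+1 * n ^ p.-1 = n ^ p * n ^ p by rewrite -!expnD; congr (_ ^ _); lia.
have E2 : (n-2) ^ p.+1 * (n-2) ^ p.-1 = (n-2) ^ p * (n-2) ^ p by rewrite -!expnD; congr (_ ^ _); lia.
have e3 : (n-2) ^ p.-1 <= n ^ p.-1 by apply: lexp; lia.
have e4 := leq_mul (leqnn (N ^ p * (n-2) ^ p.+1)) e3.
rewrite -mulnA E1; apply: (leq_trans h2); apply: leq_trans e4.
by rewrite -mulnA E2.
Qed.

Lemma final_nat a ny C K M Ck nM1 b PN2 PN P2 fM2 Mf :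
  a <= ny*C*K -> Ck*K = Mf -> Mf = M*(M-1)*fM2 -> C*fM2 <= PN2 ->
  PN2*nM1 <= PN*P2 -> (M+1)*M*P2 <= b ->
  a*((M+1)*Ck*nM1) <= (M-1)*ny*PN*b.
Proof.
move=> h1 h2 h3 h4 h5 h6.
apply: (leq_trans (leq_mul h1 (leqnn ((M+1)*Ck*nM1)))).
have e : ny*C*K*((M+1)*Ck*nM1) = ny*(M+1)*M*(M-1)*nM1*(C*fM2).
  have e0 : ny*C*K*((M+1)*Ck*nM1) = ny*(M+1)*nM1*C*(Ck*K) by ring.
  rewrite e0 h2 h3; ring.
rewrite e; apply: (leq_trans (leq_mul (leqnn (ny*(M+1)*M*(M-1)*nM1)) h4)).
have e2 : ny*(M+1)*M*(M-1)*nM1*PN2 = ny*(M+1)*M*(M-1)*(PN2*nM1) by ring.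
rewrite e2; apply: (leq_trans (leq_mul (leqnn (ny*(M+1)*M*(M-1))) h5)).
have e3 : ny*(M+1)*M*(M-1)*(PN*P2) = (M-1)*ny*PN*((M+1)*M*P2) by ring.
rewrite e3; exact: leq_mul.
Qed.

Lemma comb_ineq b p q r s : (b + 2 * p = q + r -> 2 * p + s <= q + r -> s <= b)%N.
Proof. lia. Qed.

Lemma nn_aux N n nbx : (N = n - nbx -> n <= 2 * nbx -> N.*2 <= n)%N.
Proof. lia. Qed.

Lemma aux1 M : (5 < M -> (M-1).+2 = M.+1)%N. Proof. lia. Qed.
Lemma aux2 n N : (1 < N -> N.*2 <= n -> n - 2 + 1 = n - 1)%N. Proof. lia. Qed.
Lemma aux3 n N : (1 < N -> N.*2 <= n -> n - 2 + 2 = n)%N. Proof. lia. Qed.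
Lemma aux4 M : (5 < M -> M.+1 * (M-1).+1 = (M+1) * M)%N. Proof. lia. Qed.

Lemma aux5 M : (5 < M -> M`! = M * (M - 1) * (M - 2)`!)%N.
Proof. case: M => [|[|M]] //= _; by rewrite !factS subn2 /= mulnA. Qed.
Lemma aux6 M : (5 < M -> 0 < M - 2)%N. Proof. lia. Qed.
Lemma aux7 M : (5 < M -> (M - 2).+1 = M - 1)%N. Proof. lia. Qed.

Lemma aux8 n N : (1 < N -> N.*2 <= n -> 0 < n - 2)%N. Proof. lia. Qed.


Set Implicit Arguments. Unset Strict Implicit. Unset Printing Implicit Defensive.

Lemma sum_bool_card (A : finType) (P1 : pred A) : \sum_a (P1 a : nat) = #|P1|.
Proof. by rewrite -sum1_card [RHS]big_mkcond; apply: eq_bigr => a _; rewrite unfold_in; case: (P1 a). Qed.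

Lemma sum_pair3 (A B : finType) (p : bool) (P1 : pred A) (P2 : pred B) :
  \sum_(g : A * B) ((p && P1 g.1 && P2 g.2) : nat) = p * (#|P1| * #|P2|).
Proof.
rewrite -(pair_bigA _ (fun a b => ((p && P1 a && P2 b) : nat))) /=.
case: p; last by rewrite big1 // => a _; rewrite big1.
rewrite mul1n -!sum_bool_card big_distrl /=; apply: eq_bigr => a _.
rewrite big_distrr /=; apply: eq_bigr => b _; by rewrite mulnb.
Qed.

Lemma ffact_pair o i k l : o + i = k + l -> o ^_ k * i ^_ l <= k`! * l`!.
Proof.
move=> E; have [lt|ge] := ltnP o k; first by rewrite ffact_small.
have [lt2|ge2] := ltnP i l; first by rewrite (ffact_small lt2) muln0.
have eo : o = k by lia.
have ei : i = l by lia.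
by rewrite eo ei !ffactnn.
Qed.

Section Comb.
Variables (V : finType) (arc : rel V) (k l : nat).
Local Notation P := 'I_(k + l).+1.

Lemma star_leaf (i j : P) : i != ord0 -> j != ord0 -> star_arc i j = false.
Proof.
rewrite /star_arc -!val_eqE /= => /negPf -> /negPf ->. by rewrite !andFb.
Qed.

Lemma star_center (i : P) : i != ord0 -> star_arc ord0 i || star_arc i ord0.
Proof.
rewrite /star_arc -val_eqE /=; case: i => [i Hi] /= hi. lia.
Qed.

Lemma sc_arc (phi : {ffun P -> V}) u v :
  is_star_copy arc phi -> arc (phi u) (phi v) = star_arc u v.
Proof. by case/andP=> _ /forallP /(_ u) /forallP /(_ v) /eqP. Qed.

Lemma sc_inj (phi : {ffun P -> V}) : is_star_copy arc phi -> injective phi.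
Proof. by case/andP => /injectiveP. Qed.

Definition outp (i : 'I_k) : P := lift ord0 (lshift l i).
Definition innp (j : 'I_l) : P := lift ord0 (rshift k j).

Lemma star_out (i : 'I_k) : star_arc ord0 (outp i).
Proof. rewrite /star_arc /outp /= /bump /=; case: i => [i Hi] /=. lia. Qed.

Lemma star_inn (j : 'I_l) : star_arc ord0 (innp j) = false.
Proof. rewrite /star_arc /innp /= /bump /=; case: j => [j Hj] /=. lia. Qed.


Variables (x y : V).
Hypothesis Hxy : ~~ adjacent arc x y.
Hypothesis Hxney : x != y.

Definition Aset := [set phi : {ffun P -> V} |
   [&& is_star_copy arc phi, x \in codom phi & y \in codom phi]].
Definition Leaves : {set P} := [set~ ord0].
Definition NY := [set c | adjacent arc c y].
Definition Nx := [set v | ~~ adjacent arc v x].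
Definition SG := [set S : {set V} |
   [&& S \subset Nx, x \in S, y \in S & #|S| == (k + l)%N]].
Definition Opred (a : V * {set V}) : pred V := fun v => (v \in a.2) && arc a.1 v.
Definition Ipred (a : V * {set V}) : pred V := fun v => (v \in a.2) && ~~ arc a.1 v.
Definition Tc (t : (V * {set V}) * ({ffun 'I_k -> V} * {ffun 'I_l -> V})) :=
  [&& t.1 \in setX NY SG,
      (t.2.1 \in ffun_on (Opred t.1)) && injectiveb t.2.1 &
      (t.2.2 \in ffun_on (Ipred t.1)) && injectiveb t.2.2].
Definition Phi (phi : {ffun P -> V}) :=
  ((phi ord0, phi @: Leaves), ([ffun i => phi (outp i)], [ffun j => phi (innp j)])).

Lemma Phi_inj : injective Phi.
Proof.
move=> phi psi [E0 _ E1 E2]; apply/ffunP => p.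
case: (unliftP ord0 p) => [q ->|->] //.
case: (splitP q) => [i Ei|j Ej].
  have -> : q = lshift l i by apply: val_inj.
  by have := congr1 (fun g : {ffun 'I_k -> V} => g i) E1; rewrite !ffunE.
have -> : q = rshift k j by apply: val_inj.
by have := congr1 (fun g : {ffun 'I_l -> V} => g j) E2; rewrite !ffunE.
Qed.

Lemma not_center (phi : {ffun P -> V}) v : is_star_copy arc phi -> v \in codom phi ->
  ~~ adjacent arc v (if v == x then y else x) ->
  (if v == x then y else x) \in codom phi ->
  exists2 i, v = phi i & i != ord0.
Proof.
move=> sc /codomP [i ->] nadj /codomP [j Ej]; exists i => //.
apply/negP => /eqP Ei; subst i.
have jn : j != ord0.
  apply/negP => /eqP Ej0; subst j.
  move: Ej; case: ifP => [/eqP E1 E2 | /negP E1 E2].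
    by move: Hxney; rewrite -E1 E2 eqxx.
  by apply: E1; rewrite E2.
move: nadj; rewrite Ej /adjacent !sc_arc //.
by move/negP; apply; apply: star_center.
Qed.

Lemma Phi_T (phi : {ffun P -> V}) : phi \in Aset -> Tc (Phi phi).
Proof.
rewrite inE => /and3P [sc xin yin].
have injp := sc_inj sc.
have nadjyx : ~~ adjacent arc y x by rewrite /adjacent orbC.
have [i Ei ni] : exists2 i, x = phi i & i != ord0.
  by apply: (not_center sc xin); rewrite eqxx.
have [j Ej nj] : exists2 j, y = phi j & j != ord0.
  by apply: (not_center sc yin); rewrite eq_sym (negPf Hxney).
rewrite /Tc /=; apply/and3P; split.
- rewrite in_setX; apply/andP; split.
    by rewrite inE Ej /adjacent !sc_arc //; apply: star_center.
  rewrite inE; apply/and4P; split.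
  + apply/subsetP => v /imsetP [q]; rewrite in_setC1 => nq ->.
    by rewrite inE Ei /adjacent !sc_arc // !star_leaf.
  + by rewrite Ei; apply: imset_f; rewrite in_setC1.
  + by rewrite Ej; apply: imset_f; rewrite in_setC1.
  + rewrite card_imset; last exact: injp.
    by rewrite cardsC1 card_ord.
- apply/andP; split.
    apply/ffun_onP => q; rewrite ffunE /Opred /=.
    apply/andP; split; first by apply: imset_f; rewrite in_setC1 eq_sym neq_lift.
    by rewrite sc_arc // star_out.
  apply/injectiveP => q q'; rewrite !ffunE => /injp /lift_inj /lshift_inj //.
- apply/andP; split.
    apply/ffun_onP => q; rewrite ffunE /Ipred /=.
    apply/andP; split; first by apply: imset_f; rewrite in_setC1 eq_sym neq_lift.
    by rewrite sc_arc // star_inn.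
  apply/injectiveP => q q'; rewrite !ffunE => /injp /lift_inj /rshift_inj //.
Qed.

Lemma A_le_T : #|Aset| <= #|[set t | Tc t]|.
Proof.
rewrite -(card_imset _ Phi_inj); apply: subset_leq_card.
apply/subsetP => t /imsetP [phi hphi ->]; rewrite inE; exact: Phi_T.
Qed.


Lemma OI_card a : #|Opred a| + #|Ipred a| = #|a.2|.
Proof.
rewrite -(cardsID [set v | arc a.1 v] a.2); congr (_ + _); apply: eq_card => v.
  by rewrite !inE /Opred.
by rewrite !inE /Ipred andbC.
Qed.

Lemma T_le : #|[set t | Tc t]| <= #|NY| * #|SG| * (k`! * l`!).
Proof.
rewrite -sum1dep_card.
have E : \sum_(t | Tc t) 1 = \sum_a \sum_g (Tc (a, g) : nat).
  rewrite pair_bigA /= big_mkcond; apply: eq_bigr => -[a g] _; by case: (Tc _).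
rewrite E -cardsX -sum_nat_const [in X in _ <= X]big_mkcond /=. apply: leq_sum => a _.
have -> : \sum_g (Tc (a, g) : nat) =
   \sum_(g : {ffun 'I_k -> V} * {ffun 'I_l -> V})
     (((a \in setX NY SG) &&
      [pred g1 : {ffun 'I_k -> V} | (g1 \in ffun_on (Opred a)) && injectiveb g1] g.1 &&
      [pred g2 : {ffun 'I_l -> V} | (g2 \in ffun_on (Ipred a)) && injectiveb g2] g.2) : nat).
  by apply: eq_bigr => g _; rewrite /Tc /= andbA.
rewrite sum_pair3.
case: (boolP (a \in setX NY SG)) => ha; last by rewrite mul0n.
rewrite mul1n.
have c1 : #|[pred g1 : {ffun 'I_k -> V} | (g1 \in ffun_on (Opred a)) && injectiveb g1]|
    = #|Opred a| ^_ k.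
  have := card_inj_ffuns_on 'I_k (Opred a); rewrite card_ord => <-.
  apply: eq_card => g; by rewrite !inE.
have c2 : #|[pred g2 : {ffun 'I_l -> V} | (g2 \in ffun_on (Ipred a)) && injectiveb g2]|
    = #|Ipred a| ^_ l.
  have := card_inj_ffuns_on 'I_l (Ipred a); rewrite card_ord => <-.
  apply: eq_card => g; by rewrite !inE.
rewrite c1 c2; apply: ffact_pair; rewrite OI_card.
clear c1 c2; move: ha; case: a => c S; rewrite in_setX => /andP [_]; rewrite /SG inE => /and4P [_ _ _ /eqP //].
Qed.

Hypothesis Hloop : irreflexive arc.

Lemma SG_le : #|SG| <= 'C(#|Nx| - 2, k + l - 2).
Proof.
set xy := [set x; y].
have cxy : #|xy| = 2 by rewrite cards2 Hxney.
have sub2 (S : {set V}) : x \in S -> y \in S -> xy \subset S.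
  by move=> hx hy; apply/subsetP => v; rewrite !inE => /orP [] /eqP ->.
have xyN : xy \subset Nx.
  apply: sub2; rewrite inE /adjacent ?Hloop //.
  by move: Hxy; rewrite /adjacent orbC.
have inj : {in SG &, injective (fun S => S :\: xy)}.
  move=> S1 S2; rewrite !inE => /and4P [_ x1 y1 _] /and4P [_ x2 y2 _] E.
  by rewrite -(setID S1 xy) -(setID S2 xy) E (setIidPr (sub2 _ x1 y1)) (setIidPr (sub2 _ x2 y2)).
rewrite -(card_in_imset inj).
have -> : #|Nx| - 2 = #|Nx :\: xy| by rewrite cardsD (setIidPr xyN) cxy.
rewrite -cards_draws; apply: subset_leq_card; apply/subsetP => S' /imsetP [S].
rewrite !inE => /and4P [sN hx hy /eqP cS] ->; apply/andP; split.
  by apply: setSD.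
by rewrite cardsD (setIidPr (sub2 _ hx hy)) cxy cS.
Qed.

Definition Bset := [set phi : {ffun P -> V} | (x \in codom phi) && (y \in codom phi)].

Lemma notcodom (phi : {ffun P -> V}) v : (v \notin codom phi) = (phi \in ffun_on (mem [set~ v])).
Proof.
apply/idP/ffun_onP => [h q | h].
  rewrite in_setC1; apply: contra h => /eqP <-; exact: codom_f.
by apply/codomP => -[q Eq]; move: (h q); rewrite -Eq in_setC1 eqxx.
Qed.

Lemma B_eq : #|Bset| + 2 * (#|V| - 1) ^ (k + l).+1 = #|V| ^ (k + l).+1 + (#|V| - 2) ^ (k + l).+1.
Proof.
set Ax := [set phi : {ffun P -> V} | phi \in ffun_on (mem [set~ x])].
set Ay := [set phi : {ffun P -> V} | phi \in ffun_on (mem [set~ y])].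
set Axy := [set phi : {ffun P -> V} | phi \in ffun_on (mem ([set~ x] :&: [set~ y]))].
have eC : ~: Bset = Ax :|: Ay.
  by apply/setP => phi; rewrite !inE negb_and !notcodom.
have eI : Ax :&: Ay = Axy.
  apply/setP => phi; rewrite !inE; apply/andP/ffun_onP => [[/ffun_onP h1 /ffun_onP h2] q|h].
    by rewrite in_setI h1 h2.
  by split; apply/ffun_onP => q; move: (h q); rewrite in_setI => /andP [].
have cx : #|Ax| = (#|V| - 1) ^ (k + l).+1.
  by rewrite cardsE card_ffun_on card_ord cardsC1 subn1.
have cy : #|Ay| = (#|V| - 1) ^ (k + l).+1.
  by rewrite cardsE card_ffun_on card_ord cardsC1 subn1.
have c2 : #|[set~ x] :&: [set~ y]| = #|V| - 2.
  have := cardsD1 y [set~ x]; rewrite in_setC1 eq_sym Hxney cardsC1 setDE /=.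
  lia.
have cxy : #|Axy| = (#|V| - 2) ^ (k + l).+1.
  by rewrite cardsE card_ffun_on card_ord c2.
have le : #|Ax :&: Ay| <= #|Ax| by apply: subset_leq_card; apply: subsetIl.
have := cardsC Bset; rewrite eC cardsU card_ffun card_ord eI cx cy cxy.
rewrite eI cx cxy in le.
lia.
Qed.

End Comb.

Unset Implicit Arguments.
Set Strict Implicit.
Set Printing Implicit Defensive.

Local Open Scope ring_scope.

Theorem claim4p5 (R : realFieldType) (k l : nat) (V : finType) (arc : rel V)
  (Hl : (1 <= l)%N) (Hlk : (l <= k)%N) (Hm : (6 <= k + l)%N)
  (Hloop : irreflexive arc) (x y : V)
  (Hx : x \in Xset arc R) (Hy : y \in Yset arc R) (Hxy : ~~ adjacent arc x y) :
  s_prob arc R k l x y <=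
    (k + l - 1)%:R / ((k + l + 1)%:R * ('C(k + l, k))%:R)
    * (alpha arc R + betamax arc R) * (1 - Dmin arc R) ^+ (k + l - 2).
Proof.
have Hxney : x != y.
  by apply/eqP => E; move: Hy; rewrite /Yset inE -E Hx.
set n := #|V|.
set M := (k + l)%N.
have n0 : (0 < n)%N by apply/card_gt0P; exists x.
set a := #|Aset arc k l x y|.
set b := #|Bset k l x y|.
set ny := #|NY arc y|.
set N := #|Nx arc x|.
have hA : (a <= ny * 'C(N - 2, M - 2) * (k`! * l`!))%N.
  apply: (leq_trans (A_le_T k l Hxy Hxney)).
  apply: (leq_trans (T_le arc k l x y)).
  rewrite -mulnA -[(ny * _ * _)%N]mulnA leq_mul2l; apply/orP; right.
  by rewrite leq_mul2r (SG_le k l Hxy Hxney Hloop) ?orbT.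
set nbx := #|[set a0 in [set: V] | adjacent arc a0 x]|.
have cN : N = (n - nbx)%N.
  have := cardsC [set a0 in [set: V] | adjacent arc a0 x].
  have -> : #|~: [set a0 in [set: V] | adjacent arc a0 x]| = N.
    by apply: eq_card => v; rewrite !inE.
  rewrite -/nbx -/n; lia.
have nbxn : (nbx <= n)%N by apply: max_card.
have n0R : (0 : R) < n%:R by rewrite ltr0n.
have Xle : (n <= 2 * nbx)%N.
  move: Hx; rewrite /Xset inE /rho /rho_in -/nbx -/n ler_pdivlMr // => h.
  rewrite -(ler_nat R) natrM; lra.
have sub2 (S : {set V}) : x \in S -> y \in S -> [set x; y] \subset S.
  by move=> hx hy; apply/subsetP => v; rewrite !inE => /orP [] /eqP ->.
have N2 : (2 <= N)%N.
  have : [set x; y] \subset Nx arc x.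
    apply: sub2; rewrite inE /adjacent ?Hloop //.
    by move: Hxy; rewrite /adjacent orbC.
  by move/subset_leq_card; rewrite cards2 Hxney.
have NN : (N.*2 <= n)%N by apply: (nn_aux _ _ _ cN Xle).
have hB : ((M+1) * M * (n-2) ^ (M-1) <= b)%N.
  have hb := B_eq k l Hxy Hxney; rewrite -/b -/n -/M in hb.
  have sd := sd_nat (n-2) (M-1).
  rewrite (aux1 M Hm) (aux2 _ _ N2 NN) (aux3 _ _ N2 NN) (aux4 M Hm) in sd.
  exact: (comb_ineq _ _ _ _ _ hb sd).
have F3 : ('C(N - 2, M - 2) * (M - 2)`! <= (N - 2) ^ (M - 2))%N.
  by rewrite bin_ffact ffact_le_exp.
have F4 := ratio_nat _ _ (M-2) N2 NN (aux6 M Hm).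
have F5 : ('C(M, k) * (k`! * l`!) = M`!)%N.
  by move: (bin_fact (leq_addr l k)); rewrite addKn.
have F6 := aux5 M Hm.
rewrite (aux7 M Hm) in F4.
have hF := final_nat _ _ _ _ _ _ _ _ _ _ _ _ _ hA F5 F6 F3 F4 hB.
have n2 : (0 < n - 2)%N by apply: (aux8 _ _ N2 NN).
have b0 : (0 < b)%N.
  apply: leq_trans hB; rewrite !muln_gt0 expn_gt0 n2 /M; lia.
have C0 : (0 < 'C(M, k))%N by rewrite bin_gt0 leq_addr.
change (a%:R / b%:R <= (M - 1)%:R / ((M + 1)%:R * 'C(M, k)%:R) *
  (alpha arc R + betamax arc R) * (1 - Dmin arc R) ^+ (M - 2)).
have rhox : rho arc R x = nbx%:R / n%:R by [].
have Nn : N%:R / n%:R = 1 - rho arc R x :> R.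
  rewrite rhox cN natrB // ; field; rewrite pnatr_eq0 -lt0n //.
have Dle : Dmin arc R <= rho arc R x.
  rewrite /Dmin; by apply: bigmin_le_cond.
have Nle : N%:R / n%:R <= 1 - Dmin arc R :> R by rewrite Nn; lra.
have N0 : 0 <= N%:R / n%:R :> R by rewrite divr_ge0 ?ler0n.
have NYle : ny%:R / n%:R <= alpha arc R + betamax arc R.
  have e1 : ny = (#|NY arc y :&: Xset arc R| + #|NY arc y :\: Xset arc R|)%N.
    by rewrite cardsID.
  have e2 : #|NY arc y :\: Xset arc R| = #|[set a0 in Yset arc R | adjacent arc a0 y]|.
    by apply: eq_card => v; rewrite !inE andbC.
  have h1 : (#|NY arc y :&: Xset arc R| <= #|Xset arc R|)%N.
    by apply: subset_leq_card; apply: subsetIr.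
  have h2 : rho_in arc R (Yset arc R) y <= betamax arc R.
    rewrite /betamax; by apply: le_bigmax_cond.
  move: h2; rewrite /rho_in /alpha -e2 -/n => h2.
  rewrite e1 natrD mulrDl; apply: lerD => //.
  by rewrite ler_pM2r ?invr_gt0 // ler_nat.
set c0 := (M - 1)%:R / ((M + 1)%:R * 'C(M, k)%:R) : R.
have c00 : 0 <= c0 by rewrite /c0 divr_ge0 ?mulr_ge0 ?ler0n.
have ny0 : 0 <= ny%:R / n%:R :> R by rewrite divr_ge0 ?ler0n.
apply: (le_trans (_ : _ <= c0 * (ny%:R / n%:R) * (N%:R / n%:R) ^+ (M - 2))); last first.
  apply: ler_pM.
  - exact: mulr_ge0.
  - exact: exprn_ge0.
  - by apply: ler_pM.
  by apply: lerXn2r; rewrite // qualifE /=; apply: le_trans Nle.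
have eQ : c0 * (ny%:R / n%:R) * (N%:R / n%:R) ^+ (M - 2) =
  ((M - 1) * ny * N ^ (M - 2))%:R / ((M + 1) * 'C(M, k) * n ^ (M - 1))%:R :> R.
  rewrite /c0 !natrM !natrX -(aux7 M Hm) exprS expr_div_n.
  field; rewrite natr1 expf_eq0 !pnatr_eq0 -!lt0n n0 C0 -[n == 0%N]negbK -lt0n n0 andbF //=.
rewrite eQ ler_pdivrMr ?ltr0n // mulrAC ler_pdivlMr ?ltr0n ?muln_gt0 ?C0 ?expn_gt0 ?n0 //.
  by rewrite -!natrM ler_nat.
by rewrite addn1.
Qed.
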